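(* Let $n,d\ge 2$, $\mathcal T=\sum_{k=1}^{n+1}\mathbf v_k^{\otimes d}$, let $0\le s_k\le 1$ for $1\le k\le n-1$ and $s_n:=1-\sum_{k=1}^{n-1}s_k$. Then $\big(\sum_{k=1}^n s_k\mathbf v_k,\mu\big)$ is an eigenpair of $\mathcal T$ if and only if $$\mu s_k=\frac{1}{n^{d-1}}\Big(\big((n+1)s_k-1\big)^{d-1}-(-1)^{d-1}\Big),\qquad 1\le k\le n.$$
   Context: Simplex frame: for $n\ge 2$, $\mathbf v_k=\sqrt{1+\frac1n}\,\mathbf e_k-\frac{1}{n^{3/2}}(\sqrt{n+1}-1)\mathbf 1_n$ ($1\le k\le n$), $\mathbf v_{n+1}=-\frac{1}{\sqrt n}\mathbf 1_n$, where $\mathbf e_k$ are unit vectors of $\mathbb R^n$ and $\mathbf 1_n=(1,\ldots,1)^\top$; $\|\mathbf v_k\|=1$, $\langle\mathbf v_k,\mathbf v_j\rangle=-\frac1n$ ($k\ne j$), $\sum_k\mathbf v_k=\mathbf 0$. $\mathcal T=\sum_{k=1}^{n+1}\mathbf v_k^{\otimes d}$, $\mathcal T\cdot\mathbf v^{d-1}=\sum_{k}\langle\mathbf v,\mathbf v_k\rangle^{d-1}\mathbf v_k$; an eigenpair is $(\mathbf v,\mu)$ with $\mathbf v\neq\mathbf 0$ and $\mathcal T\cdot\mathbf v^{d-1}=\mu\mathbf v$. *)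

(* Defs.v *)
From HB Require Import structures.
From mathcomp Require Import all_boot all_order all_algebra.
Set Implicit Arguments. Unset Strict Implicit. Unset Printing Implicit Defensive.
Import Order.TTheory GRing.Theory Num.Theory.
Local Open Scope ring_scope.

(* Vectors of R^n are row vectors 'rV[R]_n; R is any real closed field
   (the reals are one). Paper index k = 1..n+1 corresponds to k-1 : 'I_n.+1. *)

Definition ones (R : rcfType) (n : nat) : 'rV[R]_n := const_mx 1.
Arguments ones : clear implicits.
Definition unitv (R : rcfType) (n : nat) (k : 'I_n) : 'rV[R]_n :=
  \row_(j < n) (if j == k then 1 else 0).
Arguments unitv : clear implicits.

(* Simplex frame: v_k for k < n (paper 1 <= k <= n), v_n (paper v_{n+1}). *)
Definition simplex_frame (R : rcfType) (n : nat) (k : 'I_n.+1) : 'rV[R]_n :=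
  match ltnP k n with
  | LtnNotGeq Hk =>
      Num.sqrt (1 + n%:R^-1) *: unitv R n (Ordinal Hk)
      - ((Num.sqrt (n.+1%:R) - 1) / (n%:R * Num.sqrt n%:R)) *: ones R n
  | GeqNotLtn _ => - (Num.sqrt n%:R)^-1 *: ones R n
  end.
Arguments simplex_frame : clear implicits.

Definition dotv (R : rcfType) (n : nat) (u w : 'rV[R]_n) : R :=
  \sum_(i < n) u 0 i * w 0 i.

(* T . v^{d-1} for T = sum_k v_k^{(x) d}:  sum_k <v, v_k>^{d-1} v_k *)
Definition Tapply (R : rcfType) (n d : nat) (v : 'rV[R]_n) : 'rV[R]_n :=
  \sum_(k < n.+1) (dotv v (simplex_frame R n k)) ^+ d.-1 *: simplex_frame R n k.

Definition eigenpair (R : rcfType) (n d : nat) (v : 'rV[R]_n) (mu : R) : Prop :=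
  v != 0 /\ Tapply d v = mu *: v.

(* Main.v *)
Require Import Defs.
From HB Require Import structures.
From mathcomp Require Import all_boot all_order all_algebra.
From mathcomp Require Import ring lra zify.
Import Order.TTheory GRing.Theory Num.Theory.
Local Open Scope ring_scope.

Lemma sum_delta1 (R : rcfType) n (x : 'I_n -> R) a b (j : 'I_n) :
  \sum_i x i * (a * (i == j)%:R - b) = a * x j - b * \sum_i x i.
Proof.
under eq_bigr => i _ do rewrite mulrBr.
rewrite sumrB -mulr_suml (bigD1 j) //= eqxx mulr1 big1 ?addr0.
  by rewrite mulrC (mulrC b).
by move=> i /negbTE ->; rewrite !mulr0.
Qed.

Lemma sum_delta2 (R : rcfType) n (x : 'I_n -> R) a b (j : 'I_n) :
  \sum_i x i * (a * (j == i)%:R - b) = a * x j - b * \sum_i x i.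
Proof. by under eq_bigr => i _ do rewrite eq_sym; apply: sum_delta1. Qed.

Lemma frame_w (R : rcfType) n (k i : 'I_n) :
  simplex_frame R n (widen_ord (leqnSn n) k) 0 i =
  Num.sqrt (1 + n%:R^-1) * (i == k)%:R
   - (Num.sqrt n.+1%:R - 1) / (n%:R * Num.sqrt n%:R).
Proof.
rewrite /simplex_frame; case: ltnP => /= H; last by move: H; rewrite leqNgt /= ltn_ord.
have -> : Ordinal H = k by apply: val_inj.
by rewrite !mxE mulr1; case: (i == k).
Qed.

Lemma frame_max (R : rcfType) n (i : 'I_n) :
  simplex_frame R n ord_max 0 i = - (Num.sqrt n%:R)^-1.
Proof.
rewrite /simplex_frame; case: ltnP => /= H; first by exfalso; move: H; rewrite /= ltnn.
by rewrite !mxE mulr1.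
Qed.
Lemma key (R : rcfType) (n : nat) (a b c mu B : R) (s A : 'I_n -> R) :
  a != 0 -> a - n%:R * b = c -> c != 0 -> \sum_i s i = 1 ->
  ((exists i, a * s i - b != 0) /\
   (forall i, a * A i - b * \sum_j A j - c * B = mu * (a * s i - b)))
  <-> (forall i, mu * s i = A i - B).
Proof.
move=> ha habc hc hs; split.
  move=> [_ H].
  pose D i := A i - B - mu * s i.
  have sD : \sum_i D i = \sum_i A i - n%:R * B - mu.
    rewrite /D !sumrB sumr_const card_ord -mulr_sumr hs mulr1 mulr_natl //.
  have HD i : a * D i = b * \sum_j D j.
    rewrite sD /D; have := H i; rewrite -habc => Hi.
    apply/eqP; rewrite -subr_eq0; apply/eqP.
    transitivity (a * A i - b * \sum_j A j - (a - n%:R * b) * B - mu * (a * s i - b)); first ring.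
    by rewrite Hi subrr.
  have s0 : \sum_j D j = 0.
    have : a * \sum_j D j = n%:R * b * \sum_j D j.
      rewrite mulr_sumr (eq_bigr _ (fun i _ => HD i)) sumr_const card_ord.
      by rewrite -mulrnAl -[b *+ n]mulr_natl.
    move/eqP; rewrite -subr_eq0 -mulrBl habc mulf_eq0 (negbTE hc) /=.
    by move/eqP.
  move=> i; have := HD i; rewrite s0 mulr0 => /eqP; rewrite mulf_eq0 (negbTE ha) /=.
  by rewrite /D subr_eq0 => /eqP ->.
move=> H.
have hmu : mu = \sum_i A i - n%:R * B.
  have : \sum_i mu * s i = \sum_i (A i - B) by apply: eq_bigr => i _.
  by rewrite -mulr_sumr hs mulr1 sumrB sumr_const card_ord mulr_natl.
split.
  apply/existsP; rewrite -negb_forall; apply/negP => /forallP H0.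
  have : \sum_i (a * s i - b) = 0.
    apply: big1 => i _; exact/eqP/H0.
  rewrite sumrB -mulr_sumr hs mulr1 sumr_const card_ord -mulr_natl habc => c0.
  by move: hc; rewrite c0 eqxx.
move=> i; rewrite mulrBr mulrA (mulrC mu) -mulrA H hmu -habc; ring.
Qed.

Section Sc.
Variables (R : rcfType) (n : nat).
Hypothesis hn : (1 <= n)%N.
Let a : R := Num.sqrt (1 + n%:R^-1).
Let b : R := (Num.sqrt n.+1%:R - 1) / (n%:R * Num.sqrt n%:R).
Let c : R := (Num.sqrt n%:R)^-1.

Lemma n_gt0 : (0 : R) < n%:R. Proof. by rewrite ltr0n. Qed.
Lemma t_gt0 : (0 : R) < Num.sqrt n%:R. Proof. by rewrite sqrtr_gt0 n_gt0. Qed.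

Lemma a_def : a = Num.sqrt n.+1%:R / Num.sqrt n%:R.
Proof.
have hn0 : (n%:R : R) != 0 by rewrite gt_eqF // n_gt0.
rewrite /a (_ : 1 + n%:R^-1 = n.+1%:R * n%:R^-1); last first.
  by rewrite -addn1 natrD; field.
by rewrite sqrtrM ?ler0n // sqrtrV ?ler0n.
Qed.

Lemma a_neq0 : a != 0.
Proof. by rewrite a_def mulf_neq0 // ?invr_eq0 gt_eqF // ?t_gt0 // sqrtr_gt0 ltr0n. Qed.

Lemma c_neq0 : c != 0.
Proof. by rewrite invr_eq0 gt_eqF // t_gt0. Qed.

Lemma abc : a - n%:R * b = c.
Proof.
have hn0 : (n%:R : R) != 0 by rewrite gt_eqF // n_gt0.
have ht : Num.sqrt (n%:R : R) != 0 by rewrite gt_eqF // t_gt0.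
rewrite a_def /b /c; field; by rewrite ?hn0 ?ht.
Qed.

Lemma cc : c * c = n%:R^-1.
Proof. by rewrite /c -invrM ?unitfE ?gt_eqF ?t_gt0 // -expr2 sqr_sqrtr ?ler0n. Qed.

Lemma aa : a * a = 1 + n%:R^-1.
Proof. by rewrite -expr2 sqr_sqrtr // addr_ge0 // invr_ge0 ler0n. Qed.

Lemma abbc : a * b + b * c = n%:R^-1.
Proof.
have hn0 : (n%:R : R) != 0 by rewrite gt_eqF // n_gt0.
have ht : Num.sqrt (n%:R : R) != 0 by rewrite gt_eqF // t_gt0.
have hr := sqr_sqrtr (ler0n R n.+1).
have ht2 := sqr_sqrtr (ler0n R n).
set r := Num.sqrt (n.+1%:R : R) in hr *.
set t := Num.sqrt (n%:R : R) in ht ht2 *.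
rewrite a_def /b /c -/r -/t.
have -> : r / t * ((r - 1) / (n%:R * t)) + (r - 1) / (n%:R * t) * t^-1
   = (r ^+ 2 - 1) / (n%:R * t ^+ 2) by field; rewrite ?hn0 ?ht.
rewrite hr ht2 -addn1 natrD; field; by rewrite hn0.
Qed.
End Sc.

Theorem mainTheorem3 (R : rcfType) (n d : nat) (hn : (2 <= n)%N) (hd : (2 <= d)%N)
  (s : 'I_n -> R)
  (hs : forall k : 'I_n, (k < n.-1)%N -> 0 <= s k <= 1)
  (hsn : forall k : 'I_n, nat_of_ord k = n.-1 ->
           s k = 1 - \sum_(j < n | (j < n.-1)%N) s j)
  (mu : R) :
  eigenpair d (\sum_(k < n) s k *: simplex_frame R n (widen_ord (leqnSn n) k)) mu <->
  (forall k : 'I_n,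
     mu * s k = (n%:R ^+ d.-1)^-1 *
                ((n.+1%:R * s k - 1) ^+ d.-1 - (-1) ^+ d.-1)).
Proof.
have hn1 : (1 <= n)%N by apply: leq_trans hn.
have hk0 : (n.-1 < n)%N by rewrite ltn_predL.
set k0 : 'I_n := Ordinal hk0.
have hsum : \sum_i s i = 1.
  rewrite (bigD1 k0) //= (hsn k0 erefl) (eq_bigl (fun j : 'I_n => (j < n.-1)%N)) ?subrK //.
  move=> j /=; have := ltn_ord j; rewrite -val_eqE /= => h.
  by apply/idP/idP => H; lia.
have Ha := @a_neq0 R n hn1. have Hc := @c_neq0 R n hn1. have Habc := @abc R n hn1.
have Haa := @aa R n. have Habbc := @abbc R n hn1. have Hcc := @cc R n hn1.
set a := Num.sqrt (1 + n%:R^-1) in Ha Habc Haa Habbc.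
set b := (Num.sqrt n.+1%:R - 1) / (n%:R * Num.sqrt n%:R) in Habc Habbc.
set c := (Num.sqrt n%:R)^-1 in Hc Habc Habbc Hcc.
set v := \sum_(k < n) _.
have hv i : v 0 i = a * s i - b.
  rewrite /v summxE; under eq_bigr => k _ do rewrite mxE frame_w.
  by rewrite sum_delta2 hsum mulr1.
have hvs : \sum_i v 0 i = c.
  under eq_bigr => i _ do rewrite hv.
  by rewrite sumrB -mulr_sumr hsum mulr1 sumr_const card_ord -mulr_natl.
have hn0 : (n%:R : R) != 0 by rewrite pnatr_eq0 -lt0n.
have dw j : dotv v (simplex_frame R n (widen_ord (leqnSn n) j))
            = (n.+1%:R * s j - 1) / n%:R.
  rewrite /dotv; under eq_bigr => i _ do rewrite frame_w.
  rewrite sum_delta1 hv hvs.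
  have -> : a * (a * s j - b) - b * c = a * a * s j - (a * b + b * c) by ring.
  by rewrite Haa Habbc -addn1 natrD; field.
have dm : dotv v (simplex_frame R n ord_max) = - n%:R^-1.
  rewrite /dotv; under eq_bigr => i _ do rewrite frame_max.
  by rewrite -mulr_suml hvs mulrN Hcc.
pose A j := ((n.+1%:R * s j - 1) / n%:R) ^+ d.-1.
pose B := (- (n%:R : R)^-1) ^+ d.-1.
have hT i : Tapply d v 0 i = a * A i - b * \sum_j A j - c * B.
  rewrite /Tapply summxE big_ord_recr /=.
  under eq_bigr => j _ do rewrite mxE dw frame_w.
  rewrite sum_delta2 mxE dm frame_max /A /B; rewrite /a /b /c; ring.
have hAB i : A i - B = (n%:R ^+ d.-1)^-1 *
                ((n.+1%:R * s i - 1) ^+ d.-1 - (-1) ^+ d.-1).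
  rewrite /A /B expr_div_n (_ : - (n%:R : R)^-1 = -1 * n%:R^-1); last by rewrite mulN1r.
  rewrite exprMn exprVn; ring.
rewrite /eigenpair.
have K := @key R n a b c mu B s A Ha Habc Hc hsum.
split.
  move=> [hv0 hTe].
  have E1 : exists i, a * s i - b != 0.
    apply/existsP; rewrite -negb_forall; apply/negP => /forallP H0.
    move: hv0; rewrite (_ : v = 0) ?eqxx //; apply/rowP => i.
    by rewrite hv mxE; apply/eqP/H0.
  have E2 : forall i, a * A i - b * \sum_j A j - c * B = mu * (a * s i - b).
    by move=> i; rewrite -hT hTe mxE hv.
  by move=> i; rewrite -hAB; apply: (proj1 K (conj E1 E2)).
move=> H.
have H' : forall i, mu * s i = A i - B by move=> i; rewrite H hAB.
have [[i hi] E2] := proj2 K H'.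
split.
  by apply/negP => /eqP v0; move: hi; rewrite -hv v0 mxE eqxx.
by apply/rowP => j; rewrite hT E2 mxE hv.
Qed.
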